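(* Let $\hat{x}$ be the final value of the vector $x$ in Algorithm 1 and let $OPT$ be a set maximizing $f$ among subsets of $N$ of size at most $k$. If $\|\hat{x}\|_1<k$, then $F(\hat{x}+\mathbf{1}_{OPT\setminus\mathrm{supp}(\hat{x})})\le F(\hat{x})+c\tau$.
   Context: Setting: finite ground set $N$ whose elements arrive one at a time in a stream, non-negative submodular $f\colon 2^N\to\mathbb{R}_{\ge 0}$, positive integer $k$. $\mathbf{1}_A$ is the characteristic vector of $A$. $F$ is the multilinear extension of $f$: $F(x)=\sum_{A\subseteq N} f(A)\prod_{u\in A}x_u\prod_{u\notin A}(1-x_u)$ for $x\in[0,1]^N$, and $\partial_uF(x)=F(x\vee \mathbf{1}_u)-F(x\wedge\mathbf{1}_{N\setminus\{u\}})$ (coordinatewise max/min). $\mathrm{supp}(x)=\{u: x_u>0\}$. Algorithm 1 has parameters $p\in(0,1)$, $c>0$, $\alpha\in(0,1]$ and a number $\tau$. It starts with $x=\mathbf{0}$, and when an element $u$ arrives, if $\partial_uF(x)\ge c\tau/k$ it sets $x\leftarrow x+\min\{p,\,k-\|x\|_1\}\cdot\mathbf{1}_u$ (otherwise $x$ is unchanged). After the stream ends, it computes a random set $S_1$ with $|S_1|\le k$ and $\mathbb{E}[f(S_1)]\ge F(x)$, and a random set $S_2\subseteq\mathrm{supp}(x)$ with $|S_2|\le k$ and $\mathbb{E}[f(S_2)]\ge\alpha\cdot\max_{S\subseteq\mathrm{supp}(x),|S|\le k}f(S)$, and outputs the better of $S_1,S_2$. *)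

(* Defs.v *)
From mathcomp Require Import all_boot all_order all_algebra.
Set Implicit Arguments. Unset Strict Implicit. Unset Printing Implicit Defensive.
Import Order.TTheory GRing.Theory Num.Theory.
Local Open Scope ring_scope.

Section Defs.
Variables (R : realFieldType) (T : finType).

Definition chi (A : {set T}) : T -> R := fun v => if v \in A then 1 else 0.

Definition multilinear (f : {set T} -> R) (x : T -> R) : R :=
  \sum_(A : {set T}) f A * (\prod_(u in A) x u) * (\prod_(u in ~: A) (1 - x u)).

Definition vmax (x y : T -> R) : T -> R := fun v => Num.max (x v) (y v).
Definition vmin (x y : T -> R) : T -> R := fun v => Num.min (x v) (y v).

Definition partialF (f : {set T} -> R) (u : T) (x : T -> R) : R :=
  multilinear f (vmax x (chi [set u])) - multilinear f (vmin x (chi (~: [set u]))).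

Definition norm1 (x : T -> R) : R := \sum_(v : T) `|x v|.

Definition supp (x : T -> R) : {set T} := [set u | 0 < x u].

Definition submodular (f : {set T} -> R) : Prop :=
  forall A B : {set T}, f (A :|: B) + f (A :&: B) <= f A + f B.

Definition alg_step (f : {set T} -> R) (p c tau : R) (k : nat)
  (x : T -> R) (u : T) : T -> R :=
  if c * tau / k%:R <= partialF f u x then
    (fun v => x v + Num.min p (k%:R - norm1 x) * chi [set u] v)
  else x.

Definition alg_x (f : {set T} -> R) (p c tau : R) (k : nat) (s : seq T) : T -> R :=
  foldl (alg_step f p c tau k) (fun _ => 0) s.

End Defs.

(* Main.v *)
Require Import Defs.
From mathcomp Require Import all_boot all_order all_algebra.
From mathcomp Require Import ring lra.
From Stdlib Require Import FunctionalExtensionality.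
Import Order.TTheory GRing.Theory Num.Theory.
Local Open Scope ring_scope.

Section Aux.
Variables (R : realFieldType) (T : finType) (f : {set T} -> R).
Hypothesis submod : submodular f.

Definition upd (x : T -> R) (u : T) (t : R) : T -> R :=
  fun v => if v == u then t else x v.
Definition wv (t : R) (b : bool) : R := if b then t else 1 - t.
Definition W (x : T -> R) (A : {set T}) : R := \prod_z wv (x z) (z \in A).
Definition M (x : T -> R) : R := \sum_(A : {set T}) f A * W x A.
Definition D (u : T) (x : T -> R) : R := M (upd x u 1) - M (upd x u 0).

Lemma multE x : multilinear f x = M x.
Proof.
rewrite /multilinear /M; apply: eq_bigr => A _.
rewrite -mulrA; congr (_ * _).
rewrite /W [RHS](bigID (fun z => z \in A)) /=.
congr (_ * _); apply: eq_big => [z|z]; rewrite ?inE //.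
- by move=> ->.
- by move=> /negbTE ->.
Qed.

Lemma W_D1 x u A :
  W x A = wv (x u) (u \in A) * \prod_(z | z != u) wv (x z) (z \in A).
Proof. by rewrite /W (bigD1 u). Qed.

Lemma W_split x u A :
  W x A = x u * W (upd x u 1) A + (1 - x u) * W (upd x u 0) A.
Proof.
rewrite (W_D1 x u) (W_D1 (upd x u 1) u) (W_D1 (upd x u 0) u) /upd eqxx.
have E : forall t, \prod_(z | z != u) wv (if z == u then t else x z) (z \in A)
    = \prod_(z | z != u) wv (x z) (z \in A).
  by move=> t; apply: eq_bigr => z /negbTE ->.
rewrite !E /wv; case: (u \in A); ring.
Qed.

Lemma M_split x u :
  M x = x u * M (upd x u 1) + (1 - x u) * M (upd x u 0).
Proof.
rewrite /M !mulr_sumr -big_split /=; apply: eq_bigr => A _.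
rewrite (W_split x u A); ring.
Qed.

Lemma upd_same x u a b : upd (upd x u a) u b = upd x u b.
Proof. by apply: functional_extensionality => w; rewrite /upd; case: eqP. Qed.

Lemma upd_comm x u v a b : u != v -> upd (upd x u a) v b = upd (upd x v b) u a.
Proof.
move=> uv; apply: functional_extensionality => w; rewrite /upd.
case: (eqVneq w v) => [->|//]; by rewrite eq_sym (negbTE uv).
Qed.

Lemma D_upd_same u z t : D u (upd z u t) = D u z.
Proof. by rewrite /D !upd_same. Qed.

Lemma D_affine z u v : u != v ->
  D u z = D u (upd z v 0) + z v * (D u (upd z v 1) - D u (upd z v 0)).
Proof.
move=> uv.
rewrite /D (M_split (upd z u 1) v) (M_split (upd z u 0) v).
have zv : forall a, upd z u a v = z v by move=> a; rewrite /upd eq_sym (negbTE uv).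
rewrite !zv !(upd_comm _ _ _ _ _ uv); ring.
Qed.

Definition tog (u : T) (A : {set T}) : {set T} :=
  if u \in A then A :\ u else u |: A.

Lemma tog_inj u : injective (tog u).
Proof.
apply: (can_inj (g := tog u)) => A; rewrite /tog.
case: (boolP (u \in A)) => uA.
  by rewrite in_setD1 eqxx /= setD1K.
by rewrite setU11 setU1K.
Qed.

Lemma sum_split u (h : {set T} -> R) :
  \sum_(A : {set T}) h A = \sum_(A : {set T}) (if u \in A then 0 else h A + h (u |: A)).
Proof.
transitivity (\sum_(A : {set T}) (if u \in A then h A else 0)
             + \sum_(A : {set T}) (if u \in A then 0 else h A)).
  rewrite -big_split /=; apply: eq_bigr => A _; case: ifP => _; rewrite ?addr0 ?add0r //.
rewrite [X in X + _](reindex_inj (tog_inj u)) -big_split /=.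
apply: eq_bigr => A _; rewrite /tog; case: (boolP (u \in A)) => uA.
  by rewrite in_setD1 eqxx /= addr0.
by rewrite setU11 addrC.
Qed.

Lemma cross z u v : u != v -> (forall w, 0 <= z w <= 1) ->
  D u (upd z v 1) - D u (upd z v 0) <= 0.
Proof.
move=> uv z01.
have vu : v != u by rewrite eq_sym.
pose Q (B : {set T}) := \prod_(w | (w != u) && (w != v)) wv (z w) (w \in B).
have WQ : forall a b B, W (upd (upd z v b) u a) B = wv a (u \in B) * (wv b (v \in B) * Q B).
  move=> a b B; rewrite /W (bigD1 u) //= (bigD1 v) //= /upd eqxx (negbTE vu) eqxx.
  congr (_ * (_ * _)); apply: eq_bigr => w /andP [wu wv'].
  by rewrite (negbTE wu) (negbTE wv').
have Qu : forall B, Q (u |: B) = Q B.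
  by move=> B; apply: eq_bigr => w /andP [wu _]; rewrite in_setU1 (negbTE wu).
have Qv : forall B, Q (v |: B) = Q B.
  by move=> B; apply: eq_bigr => w /andP [_ wv']; rewrite in_setU1 (negbTE wv').
have Q0 : forall B, 0 <= Q B.
  move=> B; apply: prodr_ge0 => w _; rewrite /wv; case: (w \in B);
  have := z01 w; case/andP => h1 h2; lra.
have -> : D u (upd z v 1) - D u (upd z v 0) =
  \sum_(A : {set T}) f A * (W (upd (upd z v 1) u 1) A - W (upd (upd z v 1) u 0) A
        - W (upd (upd z v 0) u 1) A + W (upd (upd z v 0) u 0) A).
  rewrite /D /M -!sumrB; apply: eq_bigr => A _; ring.
rewrite (sum_split u) (sum_split v).
apply: sumr_le0 => A _.
case: (boolP (v \in A)) => vA //.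
rewrite in_setU1 (negbTE uv) /=.
case: (boolP (u \in A)) => uA; first by rewrite /= addr0 lexx.
rewrite !WQ !Qu !Qv !in_setU1 !eqxx (negbTE uv) (negbTE vu) (negbTE uA) (negbTE vA) /= /wv.
have S := submod (u |: A) (v |: A).
have E1 : (u |: A) :|: (v |: A) = u |: (v |: A).
  apply/setP => w; rewrite !inE; by case: (w == u); case: (w == v); case: (w \in A).
have E2 : (u |: A) :&: (v |: A) = A.
  apply/setP => w; rewrite !inE.
  case: (eqVneq w u) => [->|wu]; first by rewrite (negbTE uv) (negbTE uA).
  case: (eqVneq w v) => [->|wv']; first by rewrite (negbTE vA).
  by rewrite andbb.
rewrite E1 E2 in S.
have Q0A := Q0 A.
have H : Q A * (f (u |: (v |: A)) + f A - f (u |: A) - f (v |: A)) <= 0.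
  by apply: mulr_ge0_le0 => //; lra.
lra.
Qed.


Lemma D_step z u v t : (forall w, 0 <= z w <= 1) -> z v <= t -> t <= 1 ->
  D u (upd z v t) <= D u z.
Proof.
move=> z01 zt t1.
case: (eqVneq u v) => [<-|uv]; first by rewrite D_upd_same.
rewrite (@D_affine (upd z v t) u v uv) (@D_affine z u v uv) !upd_same.
have -> : upd z v t v = t by rewrite /upd eqxx.
have C := @cross z u v uv z01.
set C' := D u (upd z v 1) - D u (upd z v 0) in C *.
set D0 := D u (upd z v 0).
nra.
Qed.

Lemma mono x y u : (forall v, 0 <= x v) -> (forall v, x v <= y v) ->
  (forall v, y v <= 1) -> D u y <= D u x.
Proof.
move=> x0 xy y1.
pose zl (l : seq T) := fun v => if v \in l then y v else x v.
have Z01 : forall l w, 0 <= zl l w <= 1.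
  move=> l w; rewrite /zl; have := x0 w; have := xy w; have := y1 w.
  case: (w \in l) => h1 h2 h3; apply/andP; split; lra.
have H : forall l, D u (zl l) <= D u x.
  elim=> [|a l IH].
    have -> : zl [::] = x by apply: functional_extensionality => w; rewrite /zl in_nil.
    by [].
  have -> : zl (a :: l) = upd (zl l) a (y a).
    apply: functional_extensionality => w; rewrite /zl /upd in_cons.
    by case: eqP => [->|_] /=.
  apply: le_trans IH; apply: D_step => //.
    by rewrite /zl; case: ifP.
have -> : y = zl (enum T).
  by apply: functional_extensionality => w; rewrite /zl mem_enum.
exact: H.
Qed.

Lemma partialF_D x u : (forall w, 0 <= x w <= 1) -> partialF f u x = D u x.
Proof.
move=> x01; rewrite /partialF !multE /D; congr (M _ - M _);
apply: functional_extensionality => w; rewrite /vmax /vmin /upd /chi !inE;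
case: (eqVneq w u) => [->|wu] /=; have /andP [h1 h2] := x01 w; try have /andP [h3 h4] := x01 u.
- by rewrite max_r.
- by rewrite max_l.
- by rewrite min_r.
- by rewrite min_l.
Qed.

Lemma add_chi x l : uniq l -> (forall v, 0 <= x v <= 1) -> (forall v, v \in l -> x v = 0) ->
  M (fun v => x v + (v \in l)%:R) <= M x + \sum_(u <- l) D u x.
Proof.
elim: l => [|a l IH] /=.
  move=> _ _ _; rewrite big_nil addr0.
  have -> : (fun v => x v + (v \in [::])%:R) = x.
    by apply: functional_extensionality => w; rewrite in_nil addr0.
  by [].
move=> /andP [al ul] x01 xl.
have xl' : forall v, v \in l -> x v = 0.
  by move=> v vl; apply: xl; rewrite in_cons vl orbT.
rewrite big_cons.
set z' := fun v => x v + (v \in l)%:R.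
have z'a : z' a = 0 by rewrite /z' (negbTE al) xl ?mem_head // addr0.
have -> : (fun v => x v + (v \in a :: l)%:R) = upd z' a 1.
  apply: functional_extensionality => w; rewrite /upd /z' in_cons.
  case: eqP => [->|_] /=; last by [].
  by rewrite xl ?mem_head // add0r.
have Hz' : upd z' a 0 = z'.
  by apply: functional_extensionality => w; rewrite /upd; case: eqP => [->|].
have Dz : M (upd z' a 1) = M z' + D a z' by rewrite /D Hz'; ring.
rewrite Dz.
have IH' := IH ul x01 xl'.
have Dm : D a z' <= D a x.
  apply: mono.
  - by move=> v; have /andP [] := x01 v.
  - by move=> v; rewrite /z' lerDl ler0n.
  - move=> v; rewrite /z'; case: (boolP (v \in l)) => vl.
      by rewrite xl' // add0r.
    by rewrite addr0; have /andP [] := x01 v.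
rewrite -/z' in IH'.
lra.
Qed.

End Aux.
Arguments D {R T}.
Arguments M {R T}.

Section Alg.
Variables (R : realFieldType) (T : finType) (f : {set T} -> R).
Hypothesis submod : submodular f.
Variables (p c tau : R) (k : nat).
Hypotheses (p0 : 0 < p) (p1 : p < 1).

Lemma min_props (a b : R) :
  [/\ Num.min a b <= a, Num.min a b <= b & (Num.min a b = a \/ Num.min a b = b)].
Proof.
rewrite /Num.min; case: (boolP (a < b)) => h; last rewrite -leNgt in h;
split; auto; lra.
Qed.

Lemma norm1_ge0 (x : T -> R) : (forall v, 0 <= x v) -> norm1 x = \sum_v x v.
Proof. by move=> x0; apply: eq_bigr => v _; rewrite ger0_norm. Qed.

Lemma sum_chi1 (a : T) : \sum_(v : T) chi R [set a] v = 1.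
Proof.
rewrite (bigD1 a) //= /chi in_set1 eqxx big1 ?addr0 // => v.
by move=> /negbTE; rewrite in_set1 => ->.
Qed.

Lemma alg_inv (l : seq T) (x0 : T -> R) :
  uniq l -> (forall v, 0 <= x0 v <= p) -> (forall v, v \in l -> x0 v = 0) ->
  norm1 x0 <= k%:R ->
  let xf := foldl (alg_step f p c tau k) x0 l in
  [/\ (forall v, 0 <= xf v <= p), (forall v, x0 v <= xf v),
      norm1 x0 <= norm1 xf /\ norm1 xf <= k%:R,
      (forall v, v \notin l -> xf v = x0 v) &
      (norm1 xf < k%:R -> forall u, u \in l -> xf u = 0 ->
        D f u xf < c * tau / k%:R)].
Proof.
elim: l x0 => [|a l IH] x0 /=.
  move=> _ H0 _ Hn; split => //.
move=> /andP [al ul] H0 Hl Hn.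
have Ha : x0 a = 0 by apply: Hl; rewrite mem_head.
have Hl' : forall v, v \in l -> x0 v = 0.
  by move=> v vl; apply: Hl; rewrite in_cons vl orbT.
have x0ge : forall v, 0 <= x0 v by move=> v; have /andP [] := H0 v.
case: (boolP (c * tau / k%:R <= partialF f a x0)) => test.
- set d := Num.min p (k%:R - norm1 x0).
  set x1 := fun v => x0 v + d * chi R [set a] v.
  have E1 : alg_step f p c tau k x0 a = x1 by rewrite /alg_step test.
  rewrite E1.
  have [dp dk dor] : [/\ d <= p, d <= k%:R - norm1 x0 & (d = p \/ d = k%:R - norm1 x0)]
    by apply: min_props.
  have d0 : 0 <= d.
    case: dor => ->; [exact: ltW | by rewrite subr_ge0].
  have x1a : x1 a = d by rewrite /x1 /chi in_set1 eqxx Ha add0r mulr1.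
  have x1v : forall v, v != a -> x1 v = x0 v.
    by move=> v va; rewrite /x1 /chi in_set1 (negbTE va) mulr0 addr0.
  have H1 : forall v, 0 <= x1 v <= p.
    move=> v; case: (eqVneq v a) => [->|va]; first by rewrite x1a d0 dp.
    by rewrite x1v.
  have x1ge : forall v, 0 <= x1 v by move=> v; have /andP [] := H1 v.
  have n1 : norm1 x1 = norm1 x0 + d.
    rewrite (norm1_ge0 x1 x1ge) (norm1_ge0 x0 x0ge) /x1 big_split /= -mulr_sumr sum_chi1.
    by rewrite mulr1.
  clearbody x1 d.
  have Hl1 : forall v, v \in l -> x1 v = 0.
    move=> v vl; rewrite x1v ?Hl' //; apply/eqP => va; move: al; rewrite -va vl //.
  have Hn1 : norm1 x1 <= k%:R by rewrite n1; lra.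
  have [B1 B2 [B3 B4] B5 B6] := IH x1 ul H1 Hl1 Hn1.
  split => //.
  + move=> v; have h := B2 v.
    have h' : x0 v <= x1 v.
      case: (eqVneq v a) => [->|va]; first by rewrite x1a Ha.
      by rewrite x1v.
    lra.
  + split => //; rewrite n1 in B3; lra.
  + move=> v; rewrite in_cons negb_or => /andP [va vl].
    by rewrite B5 // x1v.
  + move=> hn u; rewrite in_cons; case/orP => [/eqP -> | ul'].
      rewrite B5 // x1a => d00.
      have : 0 < d.
        case: dor => ->; first exact: p0.
        rewrite n1 d00 addr0 in B3.
        rewrite subr_gt0; exact: le_lt_trans B3 hn.
      by rewrite d00 ltxx.
    exact: B6.
- have E1 : alg_step f p c tau k x0 a = x0 by rewrite /alg_step (negbTE test).
  rewrite E1.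
  have [B1 B2 [B3 B4] B5 B6] := IH x0 ul H0 Hl' Hn.
  split => //.
  + move=> v; rewrite in_cons negb_or => /andP [va vl].
    by rewrite B5.
  + move=> hn u; rewrite in_cons; case/orP => [/eqP -> | ul'].
      move=> _.
      apply: le_lt_trans (_ : D f a x0 < _).
        apply: mono.
        - exact: submod.
        - exact: x0ge.
        - exact: B2.
        - by move=> v; have /andP [_ h] := B1 v; apply: le_trans h (ltW p1).
      rewrite -(@partialF_D R T f x0 a); first by rewrite ltNge.
      by move=> v; have /andP [h1 h2] := H0 v; rewrite h1 (le_trans h2 (ltW p1)).
    exact: B6.
Qed.

End Alg.

Theorem lemma3p5 (R : realFieldType) (T : finType) (f : {set T} -> R)
  (k : nat) (p c alpha tau : R) (s : seq T) (OPT : {set T}) :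
  (forall A : {set T}, 0 <= f A) ->
  submodular f ->
  (0 < k)%N ->
  0 < p -> p < 1 ->
  0 < c ->
  0 < alpha -> alpha <= 1 ->
  0 <= tau ->
  uniq s -> (forall u : T, u \in s) ->
  (#|OPT| <= k)%N ->
  (forall S : {set T}, (#|S| <= k)%N -> f S <= f OPT) ->
  let xh := alg_x f p c tau k s in
  norm1 xh < k%:R ->
  multilinear f (fun v => xh v + chi R (OPT :\: supp xh) v)
    <= multilinear f xh + c * tau.
Proof.
move=> f0 sub k0 p0 p1 c0 a0 a1 t0 us alls OPTk OPTmax xh hn.
have Z1 : forall v : T, (0 : R) <= 0 <= p by move=> v; rewrite lexx ltW.
have Z2 : norm1 (fun _ : T => (0 : R)) <= k%:R.
  by rewrite /norm1 big1 ?ler0n // => v _; rewrite normr0.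
have [B1 B2 [B3 B4] B5 B6] := @alg_inv R T f sub p c tau k p0 p1 s (fun _ => 0) us
  Z1 (fun v _ => erefl) Z2.
rewrite -/(alg_x f p c tau k s) -/xh in B1 B2 B3 B4 B5 B6.
set S := OPT :\: supp xh.
have xh01 : forall v, 0 <= xh v <= 1.
  by move=> v; have /andP [h1 h2] := B1 v; rewrite h1 (le_trans h2 (ltW p1)).
have xS : forall v, v \in S -> xh v = 0.
  move=> v; rewrite !inE => /andP [vn _].
  have /andP [h1 _] := B1 v; move: vn; rewrite -leNgt => h2.
  by apply/eqP; rewrite eq_le h1 h2.
have -> : (fun v => xh v + chi R S v) = (fun v => xh v + (v \in enum S)%:R).
  by apply: functional_extensionality => v; rewrite mem_enum /chi; case: (v \in S).
rewrite !multE.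
apply: le_trans (@add_chi R T f sub xh (enum S) (enum_uniq S) xh01 _) _.
  by move=> v; rewrite mem_enum; apply: xS.
rewrite lerD2l big_enum /=.
have kR : (k%:R : R) != 0 by rewrite pnatr_eq0 -lt0n.
have ctk : 0 <= c * tau / k%:R by apply: divr_ge0; [apply: mulr_ge0 => //; exact: ltW | exact: ler0n].
apply: (@le_trans _ _ (\sum_(u in S) (c * tau / k%:R))).
  apply: ler_sum => u uS; apply: ltW; apply: B6 => //; exact: xS.
rewrite sumr_const -[c * tau / k%:R *+ #|S|]mulr_natr.
apply: (@le_trans _ _ (c * tau / k%:R * k%:R)).
  apply: ler_wpM2l => //; rewrite ler_nat.
  apply: leq_trans OPTk; apply: subset_leq_card; exact: subsetDl.
by rewrite divfK.
Qed.
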